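(* The family $\{X\in\mathcal{X}_2:X\not\subseteq1+8\mathbb{N}_0\}$ coincides with the set of minimal elements of the poset $\mathcal{X}_2$, and the set $\{X\in\mathcal{X}_2:X\subseteq1+8\mathbb{N}_0\}$ is linearly ordered and coincides with $\{1+2^n\mathbb{N}_0:n\ge3\}$.
   Context: $\mathbb{N}=\{1,2,\dots\}$, $\mathbb{N}_0=\{0\}\cup\mathbb{N}$, $x^{\mathbb{N}}=\{x^k:k\in\mathbb{N}\}$. $\mathcal{X}_2=\{\overline{a^{\mathbb{N}}}:a\in\mathbb{N}\setminus2\mathbb{N},\ a\ne1\}$, closures taken in the $2$-adic topology on $\mathbb{N}\setminus2\mathbb{N}$ (generated by the sets $x+2^m\mathbb{N}_0$, $x,m\in\mathbb{N}$), partially ordered by reverse inclusion: $X\le Y$ iff $Y\subseteq X$. *)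

(* Defs.v *)
From Stdlib Require Import Arith.

Definition nset := nat -> Prop.

Definition subset (A B : nset) : Prop := forall x, A x -> B x.

Definition oddN : nset := fun x => Nat.odd x = true.

Definition prog (x m : nat) : nset := fun y => exists k, y = x + 2 ^ m * k.

(* basic open sets of the 2-adic topology on N \ 2N: x + 2^m N_0 with
   x odd (so that the set lies in N \ 2N) and m in N = {1,2,...} *)
Definition basic_open (B : nset) : Prop :=
  exists x m, oddN x /\ 1 <= m /\ B = prog x m.

Definition open2 (U : nset) : Prop :=
  subset U oddN /\
  forall x, U x -> exists B, basic_open B /\ B x /\ subset B U.

Definition closure2 (S : nset) : nset :=
  fun x => oddN x /\ forall U, open2 U -> U x -> exists y, U y /\ S y.

Definition powers (a : nat) : nset := fun y => exists k, 1 <= k /\ y = a ^ k.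

Definition inX2 (X : nset) : Prop :=
  exists a, oddN a /\ a <> 1 /\ X = closure2 (powers a).

Definition le2 (X Y : nset) : Prop := subset Y X.

Definition minimal2 (X : nset) : Prop :=
  inX2 X /\ forall Y, inX2 Y -> le2 Y X -> Y = X.

(* Main.v *)
Require Import Defs.
From Stdlib Require Import Arith.
From Stdlib Require Import ZArith Lia FunctionalExtensionality PropExtensionality.

Fixpoint zpow (b : Z) (k : nat) : Z :=
  match k with O => 1%Z | S k => (b * zpow b k)%Z end.

Lemma zpow_add b k l : zpow b (k + l) = (zpow b k * zpow b l)%Z.
Proof. induction k; cbn [zpow Nat.add Nat.sub Nat.pow Nat.mul]; [ring| rewrite IHk; ring]. Qed.

Lemma zpow_mul b k l : zpow b (k * l) = zpow (zpow b k) l.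
Proof. induction l; cbn [zpow Nat.add Nat.sub Nat.pow Nat.mul]. rewrite Nat.mul_0_r; reflexivity.
 rewrite Nat.mul_succ_r, zpow_add, IHl; ring. Qed.

Lemma zpow_nat (a k : nat) : Z.of_nat (a ^ k) = zpow (Z.of_nat a) k.
Proof. induction k; cbn [zpow Nat.pow]; [reflexivity| rewrite Nat2Z.inj_mul, IHk; reflexivity]. Qed.

Lemma zpow2_nat m : Z.of_nat (2 ^ m) = zpow 2 m.
Proof. apply zpow_nat. Qed.

Lemma zpow2_pos m : (0 < zpow 2 m)%Z.
Proof. induction m; cbn [zpow Nat.add Nat.sub Nat.pow Nat.mul]; lia. Qed.

Lemma zpow2_split k n : (k <= n)%nat -> zpow 2 n = (zpow 2 k * zpow 2 (n - k))%Z.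
Proof. intros H. rewrite <- zpow_add. f_equal. lia. Qed.

Definition D (m : nat) (z : Z) : Prop := (zpow 2 m | z)%Z.

Lemma D_le m n z : (m <= n)%nat -> D n z -> D m z.
Proof. intros H [q Hq]. exists (q * zpow 2 (n - m))%Z. rewrite Hq.
  rewrite (zpow2_split m n H). ring. Qed.

Lemma D_add m x y : D m x -> D m y -> D m (x + y).
Proof. intros [p Hp] [q Hq]. exists (p + q)%Z. rewrite Hp, Hq; ring. Qed.

Lemma D_mul m x y : D m x -> D m (y * x).
Proof. intros [p Hp]. exists (y * p)%Z. rewrite Hp; ring. Qed.

Lemma D_eq m x y : x = y -> D m x -> D m y.
Proof. intros ->; auto. Qed.

Lemma D_sub m x y : D m x -> D m y -> D m (x - y).
Proof. intros H1 H2. apply (D_eq m (x + (-1) * y)); [ring|]. apply D_add; auto. apply D_mul; auto. Qed.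

Lemma D_not2 z : D 2 (4 * z + 2) -> False.
Proof. intros [q Hq]. cbn [zpow Nat.add Nat.sub Nat.pow Nat.mul] in Hq. lia. Qed.

Lemma powcong v b k : D v (b - 1) -> D v (zpow b k - 1).
Proof. intros H. induction k; cbn [zpow Nat.add Nat.sub Nat.pow Nat.mul].
 - exists 0%Z. ring.
 - apply (D_eq v (b * (zpow b k - 1) + (b - 1))); [ring|]. apply D_add; auto. apply D_mul; auto. Qed.

Lemma odd_zpow b k : Z.Odd b -> Z.Odd (zpow b k).
Proof. intros [s Hs]. induction k; cbn [zpow Nat.add Nat.sub Nat.pow Nat.mul].
 - exists 0%Z; ring.
 - destruct IHk as [u Hu]. rewrite Hu, Hs. exists (2*s*u + s + u)%Z. ring. Qed.

Lemma sq_step b v t : (2 <= v)%nat -> b = (1 + zpow 2 v * (2*t+1))%Z ->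
  exists t', (b * b = 1 + zpow 2 (S v) * (2*t'+1))%Z.
Proof. intros Hv Hb. pose proof (zpow2_split 2 v Hv) as E. cbn [zpow Nat.add Nat.sub Nat.pow Nat.mul] in E.
  set (P := zpow 2 (v - 2)) in *.
  exists (t + P * (2*t+1)*(2*t+1))%Z. cbn [zpow Nat.add Nat.sub Nat.pow Nat.mul]. rewrite Hb, E. ring. Qed.

Lemma pow2j b v t : (2 <= v)%nat -> b = (1 + zpow 2 v * (2*t+1))%Z ->
  forall j, exists t', zpow b (2 ^ j) = (1 + zpow 2 (v + j) * (2*t'+1))%Z.
Proof. intros Hv Hb j. induction j as [|j [t' IH]].
 - exists t. rewrite Nat.add_0_r. cbn [zpow Nat.add Nat.sub Nat.pow Nat.mul]. rewrite Hb. ring.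
 - rewrite Nat.pow_succ_r', Nat.mul_comm, zpow_mul, IH.
   destruct (sq_step (1 + zpow 2 (v + j) * (2 * t' + 1)) (v + j) t') as [t'' H]; [lia|reflexivity|].
   exists t''. cbn [zpow Nat.add Nat.sub Nat.pow Nat.mul]. rewrite Nat.add_succ_r. rewrite <- H. ring. Qed.

Lemma surj (c b : Z) (v : nat) (t : Z) : Z.Odd c -> (2 <= v)%nat -> b = (1 + zpow 2 v * (2*t+1))%Z ->
  forall m K0 x, D v (x - c) -> exists k, (K0 <= k)%nat /\ D m (c * zpow b k - x).
Proof.
 intros Hc Hv Hb m. induction m as [|m IH]; intros K0 x Hx.
 - exists K0; split; [lia|]. exists (c * zpow b K0 - x)%Z; cbn [zpow Nat.add Nat.sub Nat.pow Nat.mul]; ring.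
 - destruct (le_lt_dec (S m) v).
   + exists K0. split; [lia|]. apply (D_le (S m) v); auto.
     apply (D_eq v (c * (zpow b K0 - 1) - (x - c))); [ring|].
     apply D_sub; auto. apply D_mul. apply powcong. exists (2*t+1)%Z. rewrite Hb; ring.
   + destruct (IH K0 x Hx) as [k [Hk [q Hq]]].
     destruct (Z.Even_or_Odd q) as [[r Hr]|[r Hr]].
     * exists k. split; auto. exists r. cbn [zpow Nat.add Nat.sub Nat.pow Nat.mul]. rewrite Hq, Hr; ring.
     * destruct (pow2j b v t Hv Hb (m - v)) as [t' Ht'].
       replace (v + (m-v))%nat with m in Ht' by lia.
       exists (k + 2^(m-v))%nat. split; [lia|].
       rewrite zpow_add, Ht'.
       assert (Hbo : Z.Odd b). { exists (zpow 2 (v - 1) * (2*t+1))%Z.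
         rewrite Hb, (zpow2_split 1 v) by lia. cbn [zpow Nat.add Nat.sub Nat.pow Nat.mul]. ring. }
       destruct (odd_zpow b k Hbo) as [u Hu].
       destruct Hc as [s Hs].
       rewrite Hu, Hs in Hq. rewrite Hu, Hs.
       assert (Ex : x = ((2*s+1)*(2*u+1) - (2*r+1) * zpow 2 m)%Z) by (rewrite <- Hr; lia).
       rewrite Ex.
       exists (r + (2*(2*s*u+s+u)*t' + (2*s*u+s+u) + t') + 1)%Z. cbn [zpow Nat.add Nat.sub Nat.pow Nat.mul]. ring.
Qed.

Lemma val_le n v t : D n (zpow 2 v * (2*t+1)) -> (n <= v)%nat.
Proof. intros [q Hq]. destruct (le_lt_dec n v) as [|Hlt]; auto. exfalso.
  assert (E : zpow 2 n = (zpow 2 v * (2 * zpow 2 (n - v - 1)))%Z).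
  { rewrite (zpow2_split v n) by lia. f_equal. rewrite (zpow2_split 1 (n - v)) by lia.
    cbn [zpow Nat.add Nat.sub Nat.pow Nat.mul]. replace (n - v - 1)%nat with (n - v - 1)%nat by lia. reflexivity. }
  rewrite E in Hq.
  assert (2*t+1 = 2 * (q * zpow 2 (n - v - 1)))%Z.
  { apply (Z.mul_reg_l _ _ (zpow 2 v)). pose proof (zpow2_pos v); lia. rewrite Hq; ring. }
  lia. Qed.

Lemma decomp : forall n : nat, (0 < n)%nat -> exists v t, Z.of_nat n = (zpow 2 v * (2*t+1))%Z.
Proof.
  intros n. induction n as [n IH] using (well_founded_induction lt_wf). intros Hn.
  destruct (Nat.Even_or_Odd n) as [[h Hh]|[h Hh]].
  - destruct (IH h) as [v [t Ht]]; try lia. exists (S v), t. cbn [zpow Nat.add Nat.sub Nat.pow Nat.mul]. lia.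
  - exists 0%nat, (Z.of_nat h). cbn [zpow Nat.add Nat.sub Nat.pow Nat.mul]. lia.
Qed.

Lemma prog_D x m y : prog x m y <-> (x <= y)%nat /\ D m (Z.of_nat y - Z.of_nat x).
Proof. split.
 - intros [k ->]. split; [lia|]. exists (Z.of_nat k).
   rewrite Nat2Z.inj_add, Nat2Z.inj_mul, zpow2_nat. ring.
 - intros [Hle [q Hq]]. pose proof (zpow2_pos m).
   assert (0 <= q)%Z by nia. exists (Z.to_nat q). apply Nat2Z.inj.
   rewrite Nat2Z.inj_add, Nat2Z.inj_mul, zpow2_nat, Z2Nat.id; lia.
Qed.

Lemma oddN_Z x : oddN x <-> exists s, Z.of_nat x = (2*s+1)%Z.
Proof. unfold oddN. rewrite Nat.odd_spec. split.
 - intros [m ->]. exists (Z.of_nat m). lia.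
 - intros [s Hs]. exists (Z.to_nat s). lia. Qed.

Lemma closure_char (S : nset) x : closure2 S x <->
  oddN x /\ forall m, (1 <= m)%nat -> exists y, S y /\ prog x m y.
Proof. split.
 - intros [Hx H]. split; auto. intros m Hm.
   destruct (H (prog x m)) as [y [Hy1 Hy2]]; [| exists 0%nat; lia | eauto].
   split.
   + intros y [k ->]. apply oddN_Z in Hx as [s Hs]. apply oddN_Z.
     exists (s + zpow 2 (m - 1) * Z.of_nat k)%Z.
     rewrite Nat2Z.inj_add, Nat2Z.inj_mul, zpow2_nat, (zpow2_split 1 m) by lia. cbn [zpow Nat.add Nat.sub Nat.pow Nat.mul]. lia.
   + intros y [k Hk]. exists (prog y m). split; [|split].
     * exists y, m. split; [|auto]. apply oddN_Z in Hx as [s Hs]. apply oddN_Z.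
       exists (s + zpow 2 (m - 1) * Z.of_nat k)%Z. rewrite Hk.
       rewrite Nat2Z.inj_add, Nat2Z.inj_mul, zpow2_nat, (zpow2_split 1 m) by lia. cbn [zpow Nat.add Nat.sub Nat.pow Nat.mul]. lia.
     * exists 0%nat; lia.
     * intros z [k' ->]. exists (k + k')%nat. rewrite Hk. nia.
 - intros [Hx H]. split; auto. intros U [_ HU] HUx.
   destruct (HU x HUx) as [B [[x' [m [Hx' [Hm ->]]]] [[k0 Hk0] HB]]].
   destruct (H m Hm) as [y [Hy [k1 Hk1]]]. exists y. split; auto.
   apply HB. exists (k0 + k1)%nat. rewrite Hk1, Hk0. nia.
Qed.

Lemma seteq (A B : nset) : (forall x, A x <-> B x) -> A = B.
Proof. intros H; extensionality x; apply propositional_extensionality; auto. Qed.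

Lemma case1 (a v : nat) (t : Z) : (2 <= v)%nat -> Z.of_nat a = (1 + zpow 2 v * (2*t+1))%Z ->
  closure2 (powers a) = prog 1 v.
Proof.
  intros Hv Ha. pose proof (zpow2_split 2 v Hv) as E. cbn [zpow Nat.add Nat.sub Nat.pow Nat.mul] in E.
  pose proof (zpow2_pos (v - 2)) as HP.
  assert (Ht : (0 <= t)%Z) by nia.
  assert (Ha1 : (1 < a)%nat) by nia.
  apply seteq. intros x. rewrite closure_char, prog_D. split.
  - intros [Hx H]. destruct (H v) as [y [[k [Hk ->]] Hy]]; [lia|].
    apply prog_D in Hy as [_ Hy]. apply oddN_Z in Hx as [s Hs]. split; [lia|].
    apply (D_eq v ((Z.of_nat (a ^ k) - 1) - (Z.of_nat (a^k) - Z.of_nat x))); [ring|].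
    apply D_sub; auto. rewrite zpow_nat. apply powcong. exists (2*t+1)%Z. rewrite Ha; ring.
  - intros [Hle Hx]. split.
    + apply oddN_Z. destruct Hx as [q Hq]. exists (q * zpow 2 (v-1))%Z.
      rewrite (zpow2_split 1 v) in Hq by lia. cbn [zpow Nat.add Nat.sub Nat.pow Nat.mul] in Hq. lia.
    + intros m Hm. assert (Hx' : D v (Z.of_nat x - 1)) by (revert Hx; apply D_eq; lia).
      destruct (surj 1 (Z.of_nat a) v t (ex_intro _ 0%Z eq_refl) Hv Ha m (S x) (Z.of_nat x) Hx')
        as [k [Hk Hd]].
      exists (a ^ k)%nat. split. exists k; split; [lia|reflexivity].
        apply prog_D. split.
        * pose proof (Nat.pow_gt_lin_r a k Ha1). lia.
        * rewrite zpow_nat. revert Hd. apply D_eq. ring.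
Qed.

Definition T2 (w : nat) (c : Z) : nset :=
  fun x => oddN x /\ (D w (Z.of_nat x - 1) \/ D w (Z.of_nat x - c)).

Lemma zpow_sq a : zpow a 2 = (a * a)%Z.
Proof. cbn [zpow Nat.add Nat.sub Nat.pow Nat.mul]; ring. Qed.

Lemma case2 (a w : nat) (s t : Z) : (3 <= w)%nat -> Z.of_nat a = (4*s+3)%Z ->
  (Z.of_nat a * Z.of_nat a = 1 + zpow 2 w * (2*t+1))%Z ->
  closure2 (powers a) = T2 w (Z.of_nat a).
Proof.
  intros Hw Ha Ha2.
  assert (Ha1 : (1 < a)%nat) by lia.
  assert (Hb1 : D w (Z.of_nat a * Z.of_nat a - 1)) by (exists (2*t+1)%Z; rewrite Ha2; ring).
  apply seteq. intros x. rewrite closure_char. unfold T2. split.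
  - intros [Hx H]. split; auto. destruct (H w) as [y [[k [Hk ->]] Hy]]; [lia|].
    apply prog_D in Hy as [_ Hy]. rewrite zpow_nat in Hy.
    destruct (Nat.Even_or_Odd k) as [[j ->]|[j ->]].
    + left. rewrite zpow_mul, zpow_sq in Hy.
      apply (D_eq w ((zpow (Z.of_nat a * Z.of_nat a) j - 1) - (zpow (Z.of_nat a * Z.of_nat a) j - Z.of_nat x))); [ring|].
      apply D_sub; auto. apply powcong; auto.
    + right. rewrite zpow_add, zpow_mul, zpow_sq in Hy.
      apply (D_eq w (Z.of_nat a * (zpow (Z.of_nat a * Z.of_nat a) j - 1) - (zpow (Z.of_nat a * Z.of_nat a) j * zpow (Z.of_nat a) 1 - Z.of_nat x))); [cbn [zpow Nat.add Nat.sub Nat.pow Nat.mul]; ring|].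
      apply D_sub; auto. apply D_mul. apply powcong; auto.
  - intros [Hx Hc]. split; auto. intros m Hm.
    assert (Hb : (Z.of_nat a * Z.of_nat a = 1 + zpow 2 w * (2*t+1))%Z) by auto.
    destruct Hc as [Hc|Hc].
    + destruct (surj 1 _ w t (ex_intro _ 0%Z eq_refl) ltac:(lia) Hb m (S x) (Z.of_nat x) Hc)
        as [k [Hk Hd]].
      exists (a ^ (2 * k))%nat. split. exists (2*k)%nat; split; [lia|reflexivity].
      apply prog_D. split.
      * pose proof (Nat.pow_gt_lin_r a (2*k) Ha1). lia.
      * rewrite zpow_nat, zpow_mul, zpow_sq. revert Hd. apply D_eq. ring.
    + assert (Hco : Z.Odd (Z.of_nat a)) by (exists (2*s+1)%Z; lia).
      destruct (surj _ _ w t Hco ltac:(lia) Hb m (S x) (Z.of_nat x) Hc)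
        as [k [Hk Hd]].
      exists (a ^ (2 * k + 1))%nat. split. exists (2*k+1)%nat; split; [lia|reflexivity].
      apply prog_D. split.
      * pose proof (Nat.pow_gt_lin_r a (2*k+1) Ha1). lia.
      * rewrite zpow_nat, zpow_add, zpow_mul, zpow_sq. revert Hd. apply D_eq. cbn [zpow Nat.add Nat.sub Nat.pow Nat.mul]. ring.
Qed.

Lemma types (a : nat) : oddN a -> a <> 1%nat ->
  (exists v t, (2 <= v)%nat /\ Z.of_nat a = (1 + zpow 2 v * (2*t+1))%Z) \/
  (exists s w t, (3 <= w)%nat /\ Z.of_nat a = (4*s+3)%Z /\
     (Z.of_nat a * Z.of_nat a = 1 + zpow 2 w * (2*t+1))%Z).
Proof.
  intros Ha Ha1. unfold oddN in Ha. rewrite Nat.odd_spec in Ha. destruct Ha as [h Hh].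
  destruct (Nat.Even_or_Odd h) as [[g Hg]|[g Hg]].
  - left. destruct (decomp (4 * g)%nat) as [v [t Ht]]; [lia|].
    exists v, t. split; [|lia].
    apply (val_le 2 v t). exists (Z.of_nat g). rewrite <- Ht. cbn [zpow]. lia.
  - right. destruct (decomp (8 * (2*g*g+3*g+1))%nat) as [v [t Ht]]; [lia|].
    exists (Z.of_nat g), v, t. split; [|split; [lia|]].
    + apply (val_le 3 v t). exists (Z.of_nat (2*g*g+3*g+1)). rewrite <- Ht. cbn [zpow]. lia.
    + rewrite <- Ht. nia.
Qed.

Lemma inX2_cases X : inX2 X ->
  (exists v, (2 <= v)%nat /\ X = prog 1 v) \/
  (exists a s w t, (3 <= w)%nat /\ Z.of_nat a = (4*s+3)%Z /\
     (Z.of_nat a * Z.of_nat a = 1 + zpow 2 w * (2*t+1))%Z /\ X = T2 w (Z.of_nat a)).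
Proof.
  intros [a [Ha [Ha1 ->]]]. destruct (types a Ha Ha1) as [[v [t [Hv E]]]|[s [w [t [Hw [E1 E2]]]]]].
  - left. exists v. split; auto. eapply case1; eauto.
  - right. exists a, s, w, t. repeat split; auto. eapply case2; eauto.
Qed.

Lemma prog_mono x n n' : (n <= n')%nat -> subset (prog x n') (prog x n).
Proof. intros H y Hy. apply prog_D in Hy as [H1 H2]. apply prog_D. split; auto. eapply D_le; eauto. Qed.

Lemma prog1_5 n : prog 1 n 5 -> (n <= 2)%nat.
Proof. intros H. apply prog_D in H as [_ H]. apply (val_le n 2 0). revert H; apply D_eq. reflexivity. Qed.

Lemma part3 X : (inX2 X /\ subset X (prog 1 3)) <-> exists n, (3 <= n)%nat /\ X = prog 1 n.
Proof. split.
  - intros [HX Hs]. destruct (inX2_cases X HX) as [[v [Hv ->]]|[a [s [w [t [Hw [Ea [Ea2 ->]]]]]]]].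
    + destruct (Nat.eq_dec v 2) as [->|]; [|exists v; split; auto; lia].
      exfalso. assert (H5 : prog 1 2 5) by (exists 1%nat; reflexivity).
      apply Hs, prog1_5 in H5. lia.
    + exfalso. assert (Ha : T2 w (Z.of_nat a) a).
      { split. apply oddN_Z. exists (2*s+1)%Z. lia. right. exists 0%Z. ring. }
      apply Hs, prog_D in Ha as [_ Ha]. apply (D_not2 s). apply (D_le 2 3); [lia|].
      revert Ha; apply D_eq. lia.
  - intros [n [Hn ->]]. split; [|apply prog_mono; auto].
    exists (1 + 2 ^ n)%nat. split; [|split].
    + apply oddN_Z. exists (zpow 2 (n - 1)). rewrite Nat2Z.inj_add, zpow2_nat, (zpow2_split 1 n) by lia.
      cbn [zpow]. lia.
    + pose proof (Nat.pow_nonzero 2 n). lia.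
    + symmetry. apply (case1 _ n 0); [lia|]. rewrite Nat2Z.inj_add, zpow2_nat. lia.
Qed.

Lemma X5 : prog 1 2 = closure2 (powers 5).
Proof. symmetry. apply (case1 5 2 0); [lia|reflexivity]. Qed.

Theorem lemma4p9 :
  (forall X : nset, (inX2 X /\ ~ subset X (prog 1 3)) <-> minimal2 X) /\
  (forall X Y : nset, inX2 X -> subset X (prog 1 3) ->
                      inX2 Y -> subset Y (prog 1 3) -> le2 X Y \/ le2 Y X) /\
  (forall X : nset, (inX2 X /\ subset X (prog 1 3)) <->
                    exists n, 3 <= n /\ X = prog 1 n).
Proof.
  split; [|split; [|exact part3]].
  - intros X. split.
    + intros [HX Hns]. split; auto. intros Y HY Hle. unfold le2 in Hle.
      destruct (inX2_cases X HX) as [[v [Hv ->]]|[a [s [w [t [Hw [Ea [Ea2 ->]]]]]]]].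
      * assert (v = 2%nat) as ->.
        { destruct (Nat.eq_dec v 2); auto. exfalso. apply Hns. apply prog_mono. lia. }
        assert (H5 : Y 5%nat) by (apply Hle; exists 1%nat; reflexivity).
        destruct (inX2_cases Y HY) as [[v' [Hv' ->]]|[b [s' [w' [t' [Hw' [Eb [Eb2 ->]]]]]]]].
        -- apply prog1_5 in H5. f_equal. lia.
        -- exfalso. destruct H5 as [_ [H5|H5]].
           ++ assert (w' <= 2)%nat by (apply (val_le w' 2 0); revert H5; apply D_eq; reflexivity). lia.
           ++ apply (D_not2 (-s')). apply (D_le 2 w'); [lia|]. revert H5; apply D_eq.
              rewrite Eb. lia.
      * assert (Ha : T2 w (Z.of_nat a) a).
        { split. apply oddN_Z. exists (2*s+1)%Z. lia. right. exists 0%Z. ring. }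
        assert (He : T2 w (Z.of_nat a) (1 + 2 ^ w)%nat).
        { split. apply oddN_Z. exists (zpow 2 (w - 1)).
          rewrite Nat2Z.inj_add, zpow2_nat, (zpow2_split 1 w) by lia. cbn [zpow]. lia.
          left. exists 1%Z. rewrite Nat2Z.inj_add, zpow2_nat. lia. }
        apply Hle in Ha. apply Hle in He.
        destruct (inX2_cases Y HY) as [[v' [Hv' ->]]|[b [s' [w' [t' [Hw' [Eb [Eb2 ->]]]]]]]].
        -- exfalso. apply prog_D in Ha as [_ Ha]. apply (D_not2 s). apply (D_le 2 v'); [lia|].
           revert Ha; apply D_eq. lia.
        -- destruct Ha as [_ [Ha|Hab]].
           { exfalso. apply (D_not2 s). apply (D_le 2 w'); [lia|]. revert Ha; apply D_eq. lia. }
           assert (Hww : (w' <= w)%nat).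
           { destruct He as [_ [He|He]].
             - apply (val_le w' w 0). revert He; apply D_eq. rewrite Nat2Z.inj_add, zpow2_nat. lia.
             - exfalso. apply (D_not2 (zpow 2 (w - 2) - s' - 1)). apply (D_le 2 w'); [lia|].
               revert He; apply D_eq. rewrite Nat2Z.inj_add, zpow2_nat, (zpow2_split 2 w) by lia.
               cbn [zpow]. lia. }
           assert (w' = w) as ->.
           { destruct (Nat.eq_dec w' w); auto. exfalso.
             assert (H1 : D (S w') (Z.of_nat a * Z.of_nat a - Z.of_nat b * Z.of_nat b)).
             { destruct Hab as [q Hq]. rewrite (zpow2_split 1 w') in Hq by lia.
               exists (q * (q * zpow 2 (w' - 1) + Z.of_nat b))%Z.
               replace (S w') with (2 + (w' - 1))%nat by lia. rewrite zpow_add.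
               assert (Z.of_nat a = Z.of_nat b + q * (2 * zpow 2 (w' - 1)))%Z
                 by (cbn [zpow] in Hq; lia).
               rewrite H. cbn [zpow]. ring. }
             assert (H2 : D (S w') (Z.of_nat a * Z.of_nat a - 1)).
             { apply (D_le (S w') w); [lia|]. exists (2*t+1)%Z. rewrite Ea2; ring. }
             assert (H3 : D (S w') (zpow 2 w' * (2*t'+1))).
             { apply (D_eq _ ((Z.of_nat a * Z.of_nat a - 1) - (Z.of_nat a * Z.of_nat a - Z.of_nat b * Z.of_nat b))).
               rewrite Eb2. ring. apply D_sub; auto. }
             apply val_le in H3. lia. }
           apply seteq. intros x. unfold T2. split; intros [Hx Hd]; split; auto;
             destruct Hd as [Hd|Hd]; auto; right.
           ++ apply (D_eq _ ((Z.of_nat x - Z.of_nat b) - (Z.of_nat a - Z.of_nat b))); [ring|].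
              apply D_sub; auto.
           ++ apply (D_eq _ ((Z.of_nat x - Z.of_nat a) + (Z.of_nat a - Z.of_nat b))); [ring|].
              apply D_add; auto.
    + intros [HX Hmin]. split; auto. intros Hs.
      destruct (proj1 (part3 X) (conj HX Hs)) as [n [Hn ->]].
      assert (HY : inX2 (prog 1 2)).
      { exists 5%nat. split; [reflexivity|split; [lia|exact X5]]. }
      specialize (Hmin _ HY (prog_mono 1 2 n ltac:(lia))).
      assert (H5 : prog 1 2 5) by (exists 1%nat; reflexivity).
      rewrite Hmin in H5. apply prog1_5 in H5. lia.
  - intros X Y HX HXs HY HYs.
    destruct (proj1 (part3 X) (conj HX HXs)) as [n [Hn ->]].
    destruct (proj1 (part3 Y) (conj HY HYs)) as [n' [Hn' ->]].
    destruct (le_lt_dec n n'); [left|right]; apply prog_mono; lia.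
Qed.
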